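(* Let $M$ be a matroid on a finite set $E$ with $r(M)>0$. Then $\cup F(M)=\cup\mathcal{B}(M)$.
   Context: For a matroid $M$: $\mathcal{I}(M)$ its independent sets, $\mathcal{B}(M)$ its bases, $r(M)$ the size of a base, $r(X)$ the rank of $X\subseteq E$. For a set family $S$, $\cup S=\bigcup_{X\in S}X$. $s(M)=\{A\in\mathcal{I}(M): |A|=r(M)-1\}$; $K_M(X)=\{a\in E: r(X\cup\{a\})=r(X)+1\}$; $F(M)=\{K_M(X): X\in s(M)\}$. *)

(* Defs.v *)
From mathcomp Require Import all_boot.
Set Implicit Arguments. Unset Strict Implicit. Unset Printing Implicit Defensive.

(* A matroid on a finite ground set E (the finType T), given by its
   independent sets (standard independence axioms I1-I3). *)
Record matroid (T : finType) := Matroid {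
  indep : {set T} -> bool;
  indep0 : indep set0;
  indep_sub : forall A B : {set T}, A \subset B -> indep B -> indep A;
  indep_aug : forall A B : {set T}, indep A -> indep B -> #|A| < #|B| ->
      exists2 x, x \in B :\: A & indep (x |: A)
}.

Section MatroidDefs.
Variables (T : finType) (M : matroid T).

Definition mrank (X : {set T}) : nat :=
  \max_(A : {set T} | (A \subset X) && indep M A) #|A|.

Definition rankM : nat := mrank [set: T].

Definition bases : {set {set T}} := [set B | maxset (indep M) B].

Definition sM : {set {set T}} := [set A | indep M A & #|A| == rankM.-1].

Definition KM (X : {set T}) : {set T} :=
  [set a | mrank (a |: X) == (mrank X).+1].

Definition FM : {set {set T}} := [set KM X | X in sM].

End MatroidDefs.

(* Main.v *)
Require Import Defs.
From mathcomp Require Import all_boot.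
Set Implicit Arguments. Unset Strict Implicit. Unset Printing Implicit Defensive.

Section Aux.
Variables (T : finType) (M : matroid T).

Lemma mrank_indep A : indep M A -> mrank M A = #|A|.
Proof.
move=> iA; apply/eqP; rewrite eqn_leq; apply/andP; split.
  by apply/bigmax_leqP => S /andP[sS _]; apply: subset_leq_card.
by rewrite /mrank; apply: (leq_bigmax_cond A); rewrite subxx iA.
Qed.

Lemma mrank_witness (X : {set T}) : exists2 A : {set T}, (A \subset X) && indep M A & mrank M X = #|A|.
Proof.
have h : 0 < #|[pred S : {set T} | (S \subset X) && indep M S]|.
  by apply/card_gt0P; exists set0; rewrite inE sub0set indep0.
have [A PA eq] := eq_bigmax_cond (fun S : {set T} => #|S|) h.
by exists A.
Qed.

Lemma basis_card B : B \in bases M -> #|B| = rankM M.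
Proof.
rewrite inE => /maxsetP [iB maxB].
rewrite /rankM; have [A /andP[_ iA] eA] := mrank_witness [set: T].
have hB : #|B| <= mrank M [set: T].
  by rewrite /mrank; apply: (leq_bigmax_cond B); rewrite subsetT iB.
rewrite eA in hB *.
apply/eqP; rewrite eqn_leq; apply/andP; split.
  by [].
rewrite leqNgt; apply/negP => lt.
have [x xin ix] := indep_aug iB iA lt.
have := maxB _ ix (subsetUr _ _).
move=> e; have xB : x \in B by rewrite -e setU11.
by move: xin; rewrite inE xB.
Qed.

Lemma mrank_loop a X : ~~ indep M [set a] -> mrank M (a |: X) <= mrank M X.
Proof.
move=> na; apply/bigmax_leqP => S /andP[sS iS].
apply: (leq_bigmax_cond S); rewrite iS andbT.
apply/subsetP => y yS; have := subsetP sS y yS; rewrite in_setU1 => /orP[/eqP ya|//].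
subst y; case/negP: na; apply: indep_sub iS; by rewrite sub1set.
Qed.

End Aux.

Theorem proposition3 (T : finType) (M : matroid T) :
  0 < rankM M -> cover (FM M) = cover (bases M).
Proof.
move=> _; apply/setP => a; apply/bigcupP/bigcupP.
  case=> K /imsetP [X XsM ->]; rewrite inE => /eqP eK.
  have ia : indep M [set a].
    apply/negPn/negP => na; have := mrank_loop X na; by rewrite eK ltnn.
  have [B mB sB] := maxset_exists ia.
  by exists B; rewrite ?inE // -sub1set.
case=> B Bb aB.
have [iB _] : indep M B /\ (forall C, indep M C -> B \subset C -> C = B).
  by apply/maxsetP; move: Bb; rewrite inE.
have iX : indep M (B :\ a) by apply: indep_sub iB; apply: subD1set.
exists (KM M (B :\ a)); first apply/imsetP; first exists (B :\ a) => //.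
  by rewrite inE iX /= -(basis_card Bb) (cardsD1 a B) aB add1n.
rewrite inE setD1K // !mrank_indep //.
by rewrite (cardsD1 a B) aB add1n.
Qed.
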